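(* If $\zeta'\le\zeta''$ (coordinatewise) are two configurations in $\{0,1\}^H$, then $\Delta^{\zeta''}\subset\Delta^{\zeta'}$. In particular, if for some $L>0$ and $\delta>0$ the configuration $\zeta'$ is $(L,\delta)$-good on $H$, then $\zeta''$ is also $(L,\delta)$-good on $H$.
   Context: Fix $\lambda>0$, $d\ge2$, $H=\{0,1\}^d\subset\mathbb{Z}^d$; for $x\in H$ let $\mathcal{N}_{H,x}$ be the set of nearest neighbours of $x$ lying in $H$. Each site carries independent Poisson processes of rate $1$ (down marks) and rate $\lambda$ (up marks), independent over sites; $\mathbb{P}$ is the underlying probability, and all processes below are built from the same marks. For $\zeta\in\{0,1\}^H$, the threshold $2$ contact process $(\eta^\zeta_{H;t})_{t\ge0}$ starts from $\zeta$; at a down mark at $x$ the spin becomes $0$; at an up mark at $x$ at time $t$ the spin becomes $1$ if at least $2$ sites of $\mathcal{N}_{H,x}$ are in state $1$ just before $t$. The independent flip process $(\pi^\zeta_{H;t})$ starts from $\zeta$ and sets the spin at $x$ to $0$ at each down mark and to $1$ at each up mark. $\Delta^\zeta=\bigcup_{t\in[0,d^2]}\{x\in H:\eta^\zeta_{H;t}(x)\ne\pi^\zeta_{H;t}(x)\}$. A set $S$ is $L$-thin in $H$ if $|S\cap\mathcal{N}_{H,x}|\le L$ for all $x\in H$; $\zeta$ is $(L,\delta)$-good on $H$ if $\mathbb{P}(\Delta^\zeta\text{ is }L\text{-thin in }H)\ge1-\delta$. *)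

(* Defs.v *)
From HB Require Import structures.
From mathcomp Require Import all_boot all_order all_algebra.
From mathcomp Require Import all_classical all_reals all_analysis.
From mathcomp Require Import poisson_distribution.

Set Implicit Arguments.
Unset Strict Implicit.
Unset Printing Implicit Defensive.

Import Order.TTheory GRing.Theory Num.Theory.
Local Open Scope ring_scope.

(* The hypercube H = {0,1}^d, a site being the vector of its d coordinates. *)
Definition cube (d : nat) := {ffun 'I_d -> bool}.

(* y is a nearest neighbour of x in Z^d lying in H:
   x and y differ in exactly one coordinate. *)
Definition nbr (d : nat) (x y : cube d) : bool := #|[set i | x i != y i]| == 1%N.

Definition config (d : nat) := {ffun cube d -> bool}.

Definition config_le (d : nat) (z1 z2 : config d) : Prop := forall x, z1 x ==> z2 x.

(* A realisation of the marks on the time window [0, d^2]: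
   marks x false = times of the down marks (rate 1) at x,
   marks x true  = times of the up marks (rate lambda) at x. *)
Definition markfam (R : realType) (d : nat) := cube d -> bool -> seq R.

Definition window (R : realType) (d : nat) : R := (d ^ 2)%:R.

Definition events (R : realType) (d : nat) (m : markfam R d) : seq (R * (cube d * bool)) :=
  flatten [seq [seq (t, xb) | t <- m xb.1 xb.2] | xb <- enum [set: (cube d * bool)%type]].

Definition events_upto (R : realType) (d : nat) (m : markfam R d) (t : R) :=
  sort (fun e1 e2 : R * (cube d * bool) => e1.1 <= e2.1)
       [seq e <- events m | e.1 <= t].

Definition setspin (d : nat) (eta : config d) (x : cube d) (b : bool) : config d :=
  [ffun y => if y == x then b else eta y].

(* threshold-2 contact process update at a mark, using the state just before *)
Definition thr_step (R : realType) (d : nat) (eta : config d) (e : R * (cube d * bool)) : config d :=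
  let x := e.2.1 in
  if e.2.2 then
    (if (2 <= #|[set y | nbr x y & eta y]|)%N then setspin eta x true else eta)
  else setspin eta x false.

Definition ind_step (R : realType) (d : nat) (eta : config d) (e : R * (cube d * bool)) : config d :=
  setspin eta e.2.1 e.2.2.

Definition eta_proc (R : realType) (d : nat) (zeta : config d) (m : markfam R d) (t : R) : config d :=
  foldl (@thr_step R d) zeta (events_upto m t).

Definition pi_proc (R : realType) (d : nat) (zeta : config d) (m : markfam R d) (t : R) : config d :=
  foldl (@ind_step R d) zeta (events_upto m t).

Definition Delta (R : realType) (d : nat) (zeta : config d) (m : markfam R d) : {set cube d} :=
  [set x | `[< exists t : R, 0 <= t <= window R d /\
                             eta_proc zeta m t x != pi_proc zeta m t x >]].

Definition thin (d : nat) (L : nat) (S : {set cube d}) : Prop :=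
  forall x : cube d, (#|[set y | nbr x y & y \in S]| <= L)%N.

Definition cnt (R : realType) (s : seq R) (a b : R) : nat :=
  count (fun t => (a <= t) && (t < b)) s.

Definition mrate (R : realType) (lambda : R) (up : bool) : R := if up then lambda else 1.

(* The random marks (restricted to [0, d^2]) are independent Poisson processes,
   of rate 1 (down marks) and rate lambda (up marks), independent over sites:
   the joint law of the counts in any finite family of intervals which are
   disjoint whenever they concern the same (site, type) is the product of
   Poisson laws with parameters rate * length. *)
Definition poisson_marks (R : realType) (dT : measure_display) (T : measurableType dT)
    (P : probability T R) (d : nat) (lambda : R) (marks : T -> markfam R d) : Prop :=
  (forall w x up, all (fun t => 0 <= t <= window R d) (marks w x up)) /\
  forall (n : nat) (site : 'I_n -> cube d) (typ : 'I_n -> bool) (a b : 'I_n -> R)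
         (k : 'I_n -> nat),
    (forall i, 0 <= a i /\ a i < b i /\ b i <= window R d) ->
    (forall i j, i != j -> site i = site j -> typ i = typ j ->
                 b i <= a j \/ b j <= a i) ->
    measurable [set w | forall i, cnt (marks w (site i) (typ i)) (a i) (b i) = k i]%classic /\
    P [set w | forall i, cnt (marks w (site i) (typ i)) (a i) (b i) = k i]%classic
    = (\prod_(i < n) poisson_pmf (mrate lambda (typ i) * (b i - a i)) (k i))%:E.

Definition good (R : realType) (dT : measure_display) (T : measurableType dT)
    (P : probability T R) (d : nat) (marks : T -> markfam R d) (L : nat) (delta : R)
    (zeta : config d) : Prop :=
  ((1 - delta)%:E <= P [set w | thin L (Delta zeta (marks w))]%classic)%E.

(* Main.v *)
Require Import Defs.
From HB Require Import structures.
From mathcomp Require Import all_boot all_order all_algebra.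
From mathcomp Require Import all_classical all_reals all_analysis.
From mathcomp Require Import poisson_distribution.
Import Order.TTheory GRing.Theory Num.Theory.
Local Open Scope ring_scope.

Definition inv4 {d : nat} (E1 P1 E2 P2 : config d) : Prop :=
  forall x, [&& E1 x ==> E2 x, E1 x ==> P1 x, E2 x ==> P2 x &
     ((E1 x == P1 x) && (E2 x == P2 x)) || (P1 x == P2 x)].

Lemma inv4_step {R : realType} {d} (E1 P1 E2 P2 : config d) (e : R * (cube d * bool)) :
  inv4 E1 P1 E2 P2 ->
  inv4 (thr_step E1 e) (ind_step P1 e) (thr_step E2 e) (ind_step P2 e).
Proof.
move=> H x; case: e => t [y b]; rewrite /thr_step /ind_step /=.
have Hle : (#|[set z | nbr y z & E1 z]| <= #|[set z | nbr y z & E2 z]|)%N.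
  apply: subset_leq_card; apply/fintype.subsetP => z; rewrite !inE => /andP[-> /=].
  by have /and4P[/implyP h _ _ _] := H z.
case: b.
- case: ifP => c1; case: ifP => c2; rewrite /setspin ?ffunE;
  (case: (eqVneq x y) => [exy|_]; last exact: H); subst x;
  rewrite ?eqxx ?implybT ?orbT ?andbT //=;
  have /and4P[a1 a2 a3 a4] := H y => //.
  by move: (leq_trans c1 Hle); rewrite c2.
- by rewrite /setspin !ffunE; case: (eqVneq x y) => // _; exact: H.
Qed.

Lemma inv4_fold {R : realType} {d} (s : seq (R * (cube d * bool))) (E1 P1 E2 P2 : config d) :
  inv4 E1 P1 E2 P2 ->
  inv4 (foldl (@thr_step R d) E1 s) (foldl (@ind_step R d) P1 s)
       (foldl (@thr_step R d) E2 s) (foldl (@ind_step R d) P2 s).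
Proof.
elim: s E1 P1 E2 P2 => [|e s IH] E1 P1 E2 P2 H //=.
by apply: IH; apply: inv4_step.
Qed.

Lemma Delta_sub {R : realType} {d} (z1 z2 : config d) (m : markfam R d) :
  config_le z1 z2 -> Delta z2 m \subset Delta z1 m.
Proof.
move=> hz; apply/fintype.subsetP => x; rewrite !inE => hx.
have [t [ht hne]] := hx.
exists t; split => //.
move: hne; rewrite /eta_proc /pi_proc.
have H : inv4 z1 z1 z2 z2.
  by move=> y; rewrite !implybb !eqxx /= ?andbT; exact: hz.
have /and4P[/implyP h12 /implyP h1 /implyP h2 /orP[/andP[_ /eqP e2]|/eqP ep]] :=
  @inv4_fold _ _ (events_upto m t) _ _ _ _ H x.
  by rewrite e2 eqxx.
move: h12 h1 h2 ep.
case: (foldl _ z1 _ x); case: (foldl _ z2 _ x);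
case: (foldl (@ind_step R d) z1 _ x); case: (foldl (@ind_step R d) z2 _ x) => //=;
move=> a b c d'; try (by have := a erefl); try (by have := b erefl); try (by have := c erefl).
Qed.

Theorem lemma4p2 (R : realType) (dT : measure_display) (T : measurableType dT)
    (P : probability T R) (lambda : R) (d : nat)
    (marks : T -> markfam R d) :
  0 < lambda -> (2 <= d)%N ->
  poisson_marks P lambda marks ->
  (forall (zeta : config d) (L : nat),
      measurable [set w | thin L (Delta zeta (marks w))]%classic) ->
  forall zeta1 zeta2 : config d, config_le zeta1 zeta2 ->
  (forall w : T, Delta zeta2 (marks w) \subset Delta zeta1 (marks w)) /\
  (forall (L : nat) (delta : R), (0 < L)%N -> 0 < delta ->
      good P marks L delta zeta1 -> good P marks L delta zeta2).
Proof.
move=> _ _ _ hm z1 z2 hz.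
have hs : forall w : T, Delta z2 (marks w) \subset Delta z1 (marks w).
  by move=> w; apply: Delta_sub.
split => // L delta _ _; rewrite /good => hg.
apply: (le_trans hg); apply: le_measure; rewrite ?inE; try exact: hm.
move=> w /= th x; apply: leq_trans (th x); apply: subset_leq_card.
apply/fintype.subsetP => y; move: (fintype.subsetP (hs w) y); rewrite !inE => h /andP[-> /=]; by move=> /asboolP /h /asboolP.
Qed.
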